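(* Let $v=(v_l,v_h)$ be a valuation profile, let $\alpha\in(0,1)$, and let $p\in\{c_l,c_l+1,\dots,c_h\}$. Then the $\alpha$-auction game with valuations $v$ has a Nash equilibrium $\sigma$ with $\pi_l(\sigma)=c_l+(p-c_l)$ and $\pi_h(\sigma)=c_h+(c_h-p)$, and there is a sequence $\{\sigma^\lambda\}_{\lambda\in\mathbb{N}}$ of mixed-strategy profiles, each with full support on $\mathcal{B}$ for both agents and each weakly payoff-monotone for this game, such that $\sigma^\lambda\to\sigma$.
   Context: Two agents $l,h$ jointly own an indivisible good. Agent $i\in\{l,h\}$ has valuation $v_i$; valuations are even nonnegative integers bounded by a maximum valuation $\overline{v}$, with $v_l<v_h$. Agent $i$'s utility from receiving the object and paying $p$ to the other agent is $v_i-p$; from not receiving the object and receiving transfer $p$ it is $p$; agents are expected-utility maximizers. Net valuations are $c_i\equiv v_i/2$. The bid set is $\mathcal{B}=\{0,1,\dots,\overline{p}\}$ with $\overline{p}$ an integer, $\overline{p}\geq\overline{v}/2$. For $\alpha\in[0,1]$, the $\alpha$-auction (with tie-breaker favoring $h$) is: each agent simultaneously chooses a bid in $\mathcal{B}$; the agent with the strictly higher bid receives the object, and in case of a tie agent $h$ receives the object; the agent receiving the object pays $\alpha\cdot(\text{winner's bid})+(1-\alpha)\cdot(\text{loser's bid})$ to the other agent. A mixed strategy of agent $i$ is $\sigma_i\in\Delta(\mathcal{B})$, and $\pi_i(\sigma)$ is agent $i$'s expected utility under profile $\sigma$. A Nash equilibrium is a profile in which each agent's strategy puts positive probability only on bids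 maximizing her expected utility given the other agent's strategy. A profile $\sigma$ is weakly payoff-monotone for the game if for each agent $i$ and each pair of bids $b,d\in\mathcal{B}$, $\sigma_i(b)>\sigma_i(d)$ implies that the expected utility of bid $b$ for agent $i$ against $\sigma_{-i}$ is strictly greater than that of bid $d$. Convergence is pointwise convergence of probability vectors. *)

(* Defs.v *)
From Stdlib Require Import Reals Lra Lia Arith.
Open Scope R_scope.

(* Bids are naturals b with (b <= pbar)%nat.  A mixed strategy is a function
   nat -> R whose values on the bid set {0..pbar} are probabilities;
   values outside the bid set are irrelevant. *)

Definition price (alpha : R) (win lose : nat) : R :=
  alpha * INR win + (1 - alpha) * INR lose.

(* Pure payoff of agent l bidding b when h bids d (ties go to h). *)
Definition u_l (alpha : R) (vl : nat) (b d : nat) : R :=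
  if (d <? b)%nat then INR vl - price alpha b d else price alpha d b.

Definition u_h (alpha : R) (vh : nat) (d b : nat) : R :=
  if (b <=? d)%nat then INR vh - price alpha d b else price alpha b d.

Definition is_mixed (pbar : nat) (s : nat -> R) : Prop :=
  (forall b, (b <= pbar)%nat -> 0 <= s b) /\ sum_f_R0 s pbar = 1.

Definition EU_l (alpha : R) (vl pbar : nat) (sh : nat -> R) (b : nat) : R :=
  sum_f_R0 (fun d => sh d * u_l alpha vl b d) pbar.
Definition EU_h (alpha : R) (vh pbar : nat) (sl : nat -> R) (d : nat) : R :=
  sum_f_R0 (fun b => sl b * u_h alpha vh d b) pbar.

Definition pi_l (alpha : R) (vl pbar : nat) (sl sh : nat -> R) : R :=
  sum_f_R0 (fun b => sl b * EU_l alpha vl pbar sh b) pbar.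
Definition pi_h (alpha : R) (vh pbar : nat) (sl sh : nat -> R) : R :=
  sum_f_R0 (fun d => sh d * EU_h alpha vh pbar sl d) pbar.

Definition is_nash (alpha : R) (vl vh pbar : nat) (sl sh : nat -> R) : Prop :=
  is_mixed pbar sl /\ is_mixed pbar sh /\
  (forall b, (b <= pbar)%nat -> 0 < sl b ->
     forall b', (b' <= pbar)%nat -> EU_l alpha vl pbar sh b' <= EU_l alpha vl pbar sh b) /\
  (forall d, (d <= pbar)%nat -> 0 < sh d ->
     forall d', (d' <= pbar)%nat -> EU_h alpha vh pbar sl d' <= EU_h alpha vh pbar sl d).

Definition full_support (pbar : nat) (s : nat -> R) : Prop :=
  forall b, (b <= pbar)%nat -> 0 < s b.

Definition weakly_payoff_monotone (alpha : R) (vl vh pbar : nat) (sl sh : nat -> R) : Prop :=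
  (forall b d, (b <= pbar)%nat -> (d <= pbar)%nat ->
     sl d < sl b -> EU_l alpha vl pbar sh d < EU_l alpha vl pbar sh b) /\
  (forall b d, (b <= pbar)%nat -> (d <= pbar)%nat ->
     sh d < sh b -> EU_h alpha vh pbar sl d < EU_h alpha vh pbar sl b).

(* Main.v *)
Require Import Defs.
From Stdlib Require Import Reals Arith Lra Lia Psatz.
Open Scope R_scope.

Definition dlt (p b : nat) : R := if Nat.eqb b p then 1 else 0.
Definition pert (e : R) (pbar p : nat) (b : nat) : R :=
  e + (1 - (INR pbar + 1) * e) * dlt p b.

Lemma sum_lin (a c : R) (f g : nat -> R) (n : nat) :
  sum_f_R0 (fun i => a * f i + c * g i) n = a * sum_f_R0 f n + c * sum_f_R0 g n.
Proof. induction n; simpl; [ring| rewrite IHn; ring]. Qed.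

Lemma sum_dlt (p n : nat) (g : nat -> R) : (p <= n)%nat ->
  sum_f_R0 (fun d => dlt p d * g d) n = g p.
Proof.
  induction n; intros H; simpl.
  - assert (p = 0%nat) by lia; subst; unfold dlt; simpl; ring.
  - destruct (Nat.eq_dec p (S n)) as [->|Hn].
    + assert (E : sum_f_R0 (fun d => dlt (S n) d * g d) n = 0).
      { clear IHn H. assert (forall m, (m <= n)%nat -> sum_f_R0 (fun d => dlt (S n) d * g d) m = 0).
        { induction m; intros Hm; simpl.
          - unfold dlt; simpl; ring.
          - rewrite IHm by lia. unfold dlt. destruct (Nat.eqb_spec (S m) (S n)); [lia|]; ring. }
        apply H; lia. }
      rewrite E; unfold dlt; rewrite Nat.eqb_refl; ring.
    + rewrite IHn by lia. unfold dlt. destruct (Nat.eqb_spec (S n) p); [lia|]; ring.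
Qed.

Lemma abs_bet x B : Rabs x <= B -> -B <= x <= B.
Proof. intros H; pose proof (Rle_abs x); pose proof (Rle_abs (-x)); rewrite Rabs_Ropp in *; lra. Qed.

Lemma sum_bound (f : nat -> R) (B : R) (n : nat) :
  (forall i, (i <= n)%nat -> Rabs (f i) <= B) ->
  - ((INR n + 1) * B) <= sum_f_R0 f n <= (INR n + 1) * B.
Proof.
  induction n; intros H.
  - specialize (H 0%nat (le_n _)). apply abs_bet in H. simpl. lra.
  - rewrite tech5, S_INR. assert (H1 := H (S n) (le_n _)). apply abs_bet in H1.
    assert (IH := IHn (fun i Hi => H i (le_S _ _ Hi))). lra.
Qed.

Lemma sum_pert e pbar p (g : nat -> R) : (p <= pbar)%nat ->
  sum_f_R0 (fun d => pert e pbar p d * g d) pbar =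
  e * sum_f_R0 g pbar + (1 - (INR pbar + 1) * e) * g p.
Proof.
  intros Hp. rewrite <- (sum_dlt p pbar g Hp), <- sum_lin.
  apply sum_eq; intros; unfold pert; ring.
Qed.

Lemma sum_one n : sum_f_R0 (fun _ => 1) n = INR n + 1.
Proof. rewrite sum_cte, S_INR; ring. Qed.

Lemma pert_mixed e pbar p : (p <= pbar)%nat -> 0 < e -> (INR pbar + 1) * e < 1 ->
  is_mixed pbar (pert e pbar p) /\ full_support pbar (pert e pbar p).
Proof.
  intros Hp He He1.
  assert (forall b, 0 < pert e pbar p b).
  { intro b; unfold pert, dlt; destruct (Nat.eqb b p); lra. }
  split; [split|].
  - intros b _; apply Rlt_le, H.
  - transitivity (sum_f_R0 (fun d => pert e pbar p d * 1) pbar).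
    + apply sum_eq; intros; ring.
    + rewrite sum_pert, sum_one by auto. ring.
  - intros b _; apply H.
Qed.

Lemma dlt_mixed pbar p : (p <= pbar)%nat -> is_mixed pbar (dlt p).
Proof.
  intros Hp; split.
  - intros b _; unfold dlt; destruct (Nat.eqb b p); lra.
  - transitivity (sum_f_R0 (fun d => dlt p d * 1) pbar).
    + apply sum_eq; intros; ring.
    + apply sum_dlt; auto.
Qed.

Lemma cv_eps (A : R) : Un_cv (fun n => A / (INR n + 1)) 0.
Proof.
  intros eps Heps. destruct (INR_unbounded (Rabs A / eps)) as [N HN].
  exists N. intros n Hn. unfold R_dist. rewrite Rminus_0_r.
  assert (HnN : INR N <= INR n) by (apply le_INR; lia).
  assert (Hpos : 0 < INR n + 1) by (pose proof (pos_INR n); lra).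
  unfold Rdiv. rewrite Rabs_mult, Rabs_inv, (Rabs_right (INR n + 1)) by lra.
  apply Rmult_lt_reg_r with (INR n + 1); auto.
  rewrite Rmult_assoc, Rinv_l by lra.
  assert (Rabs A / eps * eps = Rabs A) by (field; lra).
  assert (0 <= Rabs A) by apply Rabs_pos.
  nra.
Qed.

Lemma cv_pert (u : nat -> R) (k l : R) : Un_cv u 0 -> Un_cv (fun n => l + u n * k) l.
Proof.
  intros H eps Heps. destruct (H (eps / (Rabs k + 1))) as [N HN].
  { apply Rdiv_lt_0_compat; auto. pose proof (Rabs_pos k); lra. }
  exists N; intros n Hn. specialize (HN n Hn). unfold R_dist in *.
  rewrite Rminus_0_r in HN.
  replace (l + u n * k - l) with (u n * k) by ring. rewrite Rabs_mult.
  pose proof (Rabs_pos k). pose proof (Rabs_pos (u n)).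
  assert (eps / (Rabs k + 1) * (Rabs k + 1) = eps) by (field; lra).
  nra.
Qed.

Lemma m_props a : 0 < a < 1 -> 0 < Rmin a (1 - a) /\ Rmin a (1-a) <= 1/2 /\
  Rmin a (1-a) <= a /\ Rmin a (1-a) <= 1 - a.
Proof. intros. unfold Rmin; destruct (Rle_dec a (1-a)); lra. Qed.

Lemma price_bnd a w l pbar : 0 < a < 1 -> (w <= pbar)%nat -> (l <= pbar)%nat ->
  0 <= price a w l <= INR pbar.
Proof.
  intros Ha Hw Hl. unfold price. apply le_INR in Hw, Hl.
  pose proof (pos_INR w); pose proof (pos_INR l). nra.
Qed.

Lemma ul_bnd a vl pbar b d : 0 < a < 1 -> (b <= pbar)%nat -> (d <= pbar)%nat ->
  Rabs (u_l a vl b d) <= INR vl + INR pbar.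
Proof.
  intros. pose proof (pos_INR vl). apply Rabs_le. unfold u_l.
  destruct (d <? b)%nat.
  - pose proof (price_bnd a b d pbar H H0 H1); lra.
  - pose proof (price_bnd a d b pbar H H1 H0); lra.
Qed.

Lemma uh_bnd a vh pbar b d : 0 < a < 1 -> (b <= pbar)%nat -> (d <= pbar)%nat ->
  Rabs (u_h a vh d b) <= INR vh + INR pbar.
Proof.
  intros. pose proof (pos_INR vh). apply Rabs_le. unfold u_h.
  destruct (b <=? d)%nat.
  - pose proof (price_bnd a d b pbar H H1 H0); lra.
  - pose proof (price_bnd a b d pbar H H0 H1); lra.
Qed.

Lemma ul_pp a vl p : u_l a vl p p = INR p.
Proof. unfold u_l, price. rewrite Nat.ltb_irrefl. ring. Qed.

Lemma uh_pp a vh p : u_h a vh p p = INR vh - INR p.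
Proof. unfold u_h, price. rewrite Nat.leb_refl. ring. Qed.

Lemma gap_l a vl p b : 0 < a < 1 -> INR vl <= 2 * INR p -> b <> p ->
  u_l a vl b p + Rmin a (1 - a) <= u_l a vl p p.
Proof.
  intros Ha Hv Hb. rewrite ul_pp. destruct (m_props a Ha) as (_ & _ & H1 & H2).
  unfold u_l, price. destruct (Nat.ltb_spec p b).
  - assert (INR p + 1 <= INR b) by (rewrite <- S_INR; apply le_INR; lia). nra.
  - assert (INR b + 1 <= INR p) by (rewrite <- S_INR; apply le_INR; lia). nra.
Qed.

Lemma gap_h a vh p d : 0 < a < 1 -> 2 * INR p <= INR vh -> d <> p ->
  u_h a vh d p + Rmin a (1 - a) <= u_h a vh p p.
Proof.
  intros Ha Hv Hb. rewrite uh_pp. destruct (m_props a Ha) as (_ & _ & H1 & H2).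
  unfold u_h, price. destruct (Nat.leb_spec p d).
  - assert (INR p + 1 <= INR d) by (rewrite <- S_INR; apply le_INR; lia). nra.
  - assert (INR d + 1 <= INR p) by (rewrite <- S_INR; apply le_INR; lia). nra.
Qed.

Lemma key m K P e Sp Sd up ud : 0 < m -> m <= 1/2 -> 0 <= K -> 0 < P -> 0 < e ->
  P * e * (4 * (K + 1)) <= m -> - (P * K) <= Sp -> Sd <= P * K -> ud + m <= up ->
  e * Sd + (1 - P * e) * ud < e * Sp + (1 - P * e) * up.
Proof.
  intros. set (X := P * e) in *.
  assert (HX : 0 < X) by (unfold X; nra).
  assert (X <= 1/8) by nra.
  assert (4 * K * X <= m) by nra.
  assert (e * (Sp - Sd) >= - 2 * K * X) by (unfold X in *; nra).
  assert ((1 - X) * (up - ud) >= (1 - X) * m) by nra.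
  nra.
Qed.

Lemma EU_pert_l a vl pbar e p b : (p <= pbar)%nat ->
  EU_l a vl pbar (pert e pbar p) b =
  e * sum_f_R0 (fun d => u_l a vl b d) pbar + (1 - (INR pbar + 1) * e) * u_l a vl b p.
Proof. intros; unfold EU_l; apply sum_pert; auto. Qed.

Lemma EU_pert_h a vh pbar e p d : (p <= pbar)%nat ->
  EU_h a vh pbar (pert e pbar p) d =
  e * sum_f_R0 (fun b => u_h a vh d b) pbar + (1 - (INR pbar + 1) * e) * u_h a vh d p.
Proof. intros; unfold EU_h; apply sum_pert; auto. Qed.

Lemma dlt_pos p b : 0 < dlt p b -> b = p.
Proof. unfold dlt; destruct (Nat.eqb_spec b p); auto; lra. Qed.

Lemma pert_lt e pbar p b d : (1 - (INR pbar + 1) * e) > 0 ->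
  pert e pbar p d < pert e pbar p b -> b = p /\ d <> p.
Proof.
  unfold pert, dlt; intros Hc H.
  destruct (Nat.eqb_spec b p), (Nat.eqb_spec d p); try lra; auto.
Qed.

Theorem mainTheorem4 (vbar pbar vl vh p : nat) (alpha : R) :
  Nat.Even vl -> Nat.Even vh -> (vh <= vbar)%nat -> (vl < vh)%nat ->
  (vbar <= 2 * pbar)%nat ->
  0 < alpha < 1 ->
  INR vl / 2 <= INR p <= INR vh / 2 ->
  exists sl sh : nat -> R,
    is_nash alpha vl vh pbar sl sh /\
    pi_l alpha vl pbar sl sh = INR vl / 2 + (INR p - INR vl / 2) /\
    pi_h alpha vh pbar sl sh = INR vh / 2 + (INR vh / 2 - INR p) /\
    exists sql sqh : nat -> nat -> R,
      (forall n, is_mixed pbar (sql n) /\ is_mixed pbar (sqh n) /\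
                 full_support pbar (sql n) /\ full_support pbar (sqh n) /\
                 weakly_payoff_monotone alpha vl vh pbar (sql n) (sqh n)) /\
      (forall b, (b <= pbar)%nat ->
         Un_cv (fun n => sql n b) (sl b) /\ Un_cv (fun n => sqh n b) (sh b)).
Proof.
  intros _ _ Hvh Hlh Hvb Ha [Hp1 Hp2].
  assert (Hpp : (p <= pbar)%nat).
  { apply INR_le. apply le_INR in Hvh, Hvb. rewrite mult_INR in Hvb. simpl in Hvb. lra. }
  assert (Hl2 : INR vl <= 2 * INR p) by lra.
  assert (Hh2 : 2 * INR p <= INR vh) by lra.
  assert (Hlh' : INR vl <= INR vh) by (apply le_INR; lia).
  exists (dlt p), (dlt p).
  assert (EUl : forall b, EU_l alpha vl pbar (dlt p) b = u_l alpha vl b p).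
  { intro b; unfold EU_l; apply (sum_dlt p pbar (fun d => u_l alpha vl b d)); auto. }
  assert (EUh : forall d, EU_h alpha vh pbar (dlt p) d = u_h alpha vh d p).
  { intro d; unfold EU_h; apply (sum_dlt p pbar (fun b => u_h alpha vh d b)); auto. }
  destruct (m_props alpha Ha) as (Hm0 & Hm1 & _ & _).
  split; [|split; [|split]].
  - split; [apply dlt_mixed; auto|split; [apply dlt_mixed; auto|split]].
    + intros b _ Hb b' _. apply dlt_pos in Hb; subst b. rewrite !EUl.
      destruct (Nat.eq_dec b' p) as [->|Hne]; [lra|].
      pose proof (gap_l alpha vl p b' Ha Hl2 Hne); lra.
    + intros d _ Hd d' _. apply dlt_pos in Hd; subst d. rewrite !EUh.
      destruct (Nat.eq_dec d' p) as [->|Hne]; [lra|].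
      pose proof (gap_h alpha vh p d' Ha Hh2 Hne); lra.
  - unfold pi_l. rewrite (sum_dlt p pbar (fun b => EU_l alpha vl pbar (dlt p) b)) by auto.
    rewrite EUl, ul_pp. lra.
  - unfold pi_h. rewrite (sum_dlt p pbar (fun d => EU_h alpha vh pbar (dlt p) d)) by auto.
    rewrite EUh, uh_pp. lra.
  - set (m := Rmin alpha (1 - alpha)) in *.
    set (K := INR vh + INR pbar).
    set (P := INR pbar + 1).
    assert (HK : 0 <= K) by (unfold K; pose proof (pos_INR vh); pose proof (pos_INR pbar); lra).
    assert (HP : 0 < P) by (unfold P; pose proof (pos_INR pbar); lra).
    set (A := m / (4 * P * (K + 1))).
    assert (HA : 0 < A) by (unfold A; apply Rdiv_lt_0_compat; nra).
    set (e := fun n : nat => A / (INR n + 1)).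
    assert (He : forall n, 0 < e n /\ P * e n * (4 * (K + 1)) <= m).
    { intro n. pose proof (pos_INR n). unfold e. split.
      - apply Rdiv_lt_0_compat; lra.
      - replace (P * (A / (INR n + 1)) * (4 * (K + 1))) with (m / (INR n + 1))
          by (unfold A; field; lra).
        apply Rmult_le_reg_r with (INR n + 1); [lra|].
        replace (m / (INR n + 1) * (INR n + 1)) with m by (field; lra). nra. }
    exists (fun n => pert (e n) pbar p), (fun n => pert (e n) pbar p).
    split.
    + intro n. destruct (He n) as [He0 He1].
      assert (HPe : P * e n < 1) by nra.
      destruct (pert_mixed (e n) pbar p Hpp He0 HPe) as [Hm Hf].
      assert (Hc : 1 - (INR pbar + 1) * e n > 0) by (fold P; lra).
      do 4 (split; auto). split.
      * intros b d Hb Hd Hlt. destruct (pert_lt _ _ _ _ _ Hc Hlt) as [-> Hne].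
        rewrite !EU_pert_l by auto. fold P.
        assert (Bp := sum_bound (fun d0 => u_l alpha vl p d0) (INR vl + INR pbar) pbar
                  (fun i Hi => ul_bnd alpha vl pbar p i Ha Hpp Hi)).
        assert (Bd := sum_bound (fun d0 => u_l alpha vl d d0) (INR vl + INR pbar) pbar
                  (fun i Hi => ul_bnd alpha vl pbar d i Ha Hd Hi)).
        fold P in Bp, Bd.
        assert (P * (INR vl + INR pbar) <= P * K) by (unfold K; nra).
        apply (key m K P); auto; try lra.
        exact (gap_l alpha vl p d Ha Hl2 Hne).
      * intros b d Hb Hd Hlt. destruct (pert_lt _ _ _ _ _ Hc Hlt) as [-> Hne].
        rewrite !EU_pert_h by auto. fold P.
        assert (Bp := sum_bound (fun d0 => u_h alpha vh p d0) (INR vh + INR pbar) pbar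
                  (fun i Hi => uh_bnd alpha vh pbar i p Ha Hi Hpp)).
        assert (Bd := sum_bound (fun d0 => u_h alpha vh d d0) (INR vh + INR pbar) pbar
                  (fun i Hi => uh_bnd alpha vh pbar i d Ha Hi Hd)).
        fold P K in Bp, Bd.
        apply (key m K P); auto; try lra.
        exact (gap_h alpha vh p d Ha Hh2 Hne).
    + intros b Hb.
      assert (Hcv : Un_cv (fun n => pert (e n) pbar p b) (dlt p b)).
      { intros eps Heps.
        destruct (cv_pert e (1 - P * dlt p b) (dlt p b) (cv_eps A) eps Heps) as [N HN].
        exists N; intros n Hn. specialize (HN n Hn).
        unfold pert; fold P.
        replace (e n + (1 - P * e n) * dlt p b) with (dlt p b + e n * (1 - P * dlt p b)) by ring.
        exact HN. }
      split; exact Hcv.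
Qed.
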